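(* There is a universal constant $c<\infty$ with the following property: if $f\in C^\infty(H^2)$ is a positive solution of $x^{-3}(x^3f_x)_x+f_{yy}=0$ (equivalently $f_{xx}+f_{yy}+3x^{-1}f_x=0$) on $H^2$, then $$x\,|\nabla\log f|(x,y)<c\quad\text{for all }(x,y)\in H^2,$$ where $\nabla$ is the Euclidean gradient in $(x,y)$.
   Context: $H^2=\{(x,y)\in\mathbb{R}^2: x>0\}$ is the open right half-plane. *)

(* Defs.v *)
From Stdlib Require Import Reals.
Open Scope R_scope.

Definition H2 (x y : R) : Prop := 0 < x.

Definition partial_x (f : R -> R -> R) (x y l : R) : Prop :=
  derivable_pt_lim (fun t => f t y) x l.
Definition partial_y (f : R -> R -> R) (x y l : R) : Prop :=
  derivable_pt_lim (fun t => f x t) y l.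

Definition continuous2_at (f : R -> R -> R) (x y : R) : Prop :=
  forall eps, 0 < eps -> exists delta, 0 < delta /\
    forall x' y', Rabs (x' - x) < delta -> Rabs (y' - y) < delta ->
      Rabs (f x' y' - f x y) < eps.

(* f is C^infinity on the open set U: f belongs to a family S of functions,
   each jointly continuous on U and having partial derivatives on U which
   (as functions) again belong to S.  Hence all partial derivatives of all
   orders exist and are continuous on U. *)
Definition smooth_on (U : R -> R -> Prop) (f : R -> R -> R) : Prop :=
  exists S : (R -> R -> R) -> Prop, S f /\
    forall g, S g ->
      (forall x y, U x y -> continuous2_at g x y) /\
      exists gx gy : R -> R -> R, S gx /\ S gy /\
        forall x y, U x y -> partial_x g x y (gx x y) /\ partial_y g x y (gy x y).

(* Main.v *)
Require Import Defs.
From Stdlib Require Import Reals Lra Psatz ClassicalEpsilon.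
From Coquelicot Require Import Coquelicot.
Open Scope R_scope.


Lemma dval f x l l' : derivable_pt_lim f x l -> l = l' -> derivable_pt_lim f x l'.
Proof. intros H ->; exact H. Qed.

Lemma dmul f g x a b : derivable_pt_lim f x a -> derivable_pt_lim g x b ->
  derivable_pt_lim (fun t => f t * g t) x (a * g x + f x * b).
Proof. intros Hf Hg. exact (derivable_pt_lim_mult f g x a b Hf Hg). Qed.

Lemma dplus f g x a b : derivable_pt_lim f x a -> derivable_pt_lim g x b ->
  derivable_pt_lim (fun t => f t + g t) x (a + b).
Proof. intros Hf Hg. exact (derivable_pt_lim_plus f g x a b Hf Hg). Qed.

Lemma dconst c x : derivable_pt_lim (fun _ => c) x 0.
Proof. exact (derivable_pt_lim_const c x). Qed.

Lemma did x : derivable_pt_lim (fun t => t) x 1.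
Proof. exact (derivable_pt_lim_id x). Qed.

Lemma dloc f g x l : (exists d, 0 < d /\ forall t, Rabs (t - x) < d -> f t = g t) ->
  derivable_pt_lim f x l -> derivable_pt_lim g x l.
Proof.
  intros [d [Hd Hfg]] H. apply is_derive_Reals. apply is_derive_Reals in H.
  apply (is_derive_ext_loc f g). 2: exact H.
  exists (mkposreal d Hd). intros y Hy. apply Hfg. exact Hy.
Qed.

Lemma dinv f x a : derivable_pt_lim f x a -> f x <> 0 ->
  derivable_pt_lim (fun t => / f t) x (- a / (f x * f x)).
Proof.
  intros Hf Hn.
  assert (H := derivable_pt_lim_div (fun _ => 1) f x 0 a (dconst 1 x) Hf Hn).
  eapply dval.
  - eapply dloc; [| exact H]. exists 1; split; [lra|]. intros t _. unfold div_fct, Rdiv. ring.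
  - unfold Rsqr. field. exact Hn.
Qed.



Lemma quot_sign a h : h <> 0 -> ((a / h) * h = a).
Proof. intros; field; auto. Qed.

Lemma max_d1 g x l d : 0 < d -> derivable_pt_lim g x l ->
  (forall t, Rabs (t - x) < d -> g t <= g x) -> l = 0.
Proof.
  intros Hd Hl Hm.
  destruct (Rtotal_order l 0) as [Hlt|[Heq|Hgt]]; [|exact Heq|].
  - exfalso. destruct (Hl (- l) ltac:(lra)) as [del Hdel].
    set (h := - Rmin del d / 2).
    assert (Hm1 : 0 < Rmin del d) by (apply Rmin_pos; [apply cond_pos|lra]).
    assert (Hh : h <> 0) by (unfold h; lra).
    assert (Ha : Rabs h < del).
    { unfold h. rewrite Rabs_left by lra. pose proof (Rmin_l del d). lra. }
    specialize (Hdel h Hh Ha).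
    assert (Hg : g (x + h) <= g x).
    { apply Hm. replace (x + h - x) with h by ring. rewrite Rabs_left by (unfold h; lra).
      pose proof (Rmin_r del d). unfold h; lra. }
    pose proof (quot_sign (g (x + h) - g x) h Hh) as Hq.
    set (q := (g (x + h) - g x) / h) in *.
    assert (0 <= q) by (assert (h < 0) by (unfold h; lra); nra).
    pose proof (Rle_abs (q - l)). lra.
  - exfalso. destruct (Hl l ltac:(lra)) as [del Hdel].
    set (h := Rmin del d / 2).
    assert (Hm1 : 0 < Rmin del d) by (apply Rmin_pos; [apply cond_pos|lra]).
    assert (Hh : h <> 0) by (unfold h; lra).
    assert (Ha : Rabs h < del).
    { unfold h. rewrite Rabs_right by lra. pose proof (Rmin_l del d). lra. }
    specialize (Hdel h Hh Ha).
    assert (Hg : g (x + h) <= g x).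
    { apply Hm. replace (x + h - x) with h by ring. rewrite Rabs_right by (unfold h; lra).
      pose proof (Rmin_r del d). unfold h; lra. }
    pose proof (quot_sign (g (x + h) - g x) h Hh) as Hq.
    set (q := (g (x + h) - g x) / h) in *.
    assert (q <= 0) by (assert (0 < h) by (unfold h; lra); nra).
    pose proof (Rle_abs (-(q - l))). rewrite Rabs_Ropp in *. lra.
Qed.

Lemma max_d2 g g1 x l d : 0 < d ->
  (forall t, Rabs (t - x) < d -> derivable_pt_lim g t (g1 t)) ->
  derivable_pt_lim g1 x l ->
  (forall t, Rabs (t - x) < d -> g t <= g x) -> l <= 0.
Proof.
  intros Hd Hg Hl Hm.
  assert (H0 : g1 x = 0).
  { apply (max_d1 g x (g1 x) d Hd); auto. apply Hg. rewrite Rminus_diag, Rabs_R0; lra. }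
  destruct (Rle_or_lt l 0) as [?|Hgt]; [assumption|exfalso].
  destruct (Hl l Hgt) as [del Hdel].
  set (h0 := Rmin del d / 2).
  assert (Hm1 : 0 < Rmin del d) by (apply Rmin_pos; [apply cond_pos|lra]).
  pose proof (Rmin_l del d). pose proof (Rmin_r del d).
  assert (Hpos : forall h, 0 < h -> h < del -> 0 < g1 (x + h)).
  { intros h Hh1 Hh2. assert (Hn : h <> 0) by lra.
    assert (Ha : Rabs h < del) by (rewrite Rabs_right; lra).
    specialize (Hdel h Hn Ha). rewrite H0, Rminus_0_r in Hdel.
    pose proof (quot_sign (g1 (x + h)) h Hn) as Hq.
    set (q := g1 (x + h) / h) in *.
    pose proof (Rle_abs (-(q - l))). rewrite Rabs_Ropp in *.
    assert (0 < q) by lra. nra. }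
  destruct (MVT_cor2 g g1 x (x + h0)) as [c [Hc1 Hc2]].
  { unfold h0; lra. }
  { intros c Hc. apply Hg. rewrite Rabs_right by lra. unfold h0 in *; lra. }
  assert (0 < g1 c).
  { replace c with (x + (c - x)) by ring. apply Hpos; unfold h0 in *; lra. }
  assert (g (x + h0) <= g x).
  { apply Hm. replace (x + h0 - x) with h0 by ring. rewrite Rabs_right; unfold h0; lra. }
  assert (0 < g1 c * (x + h0 - x)) by (apply Rmult_lt_0_compat; unfold h0 in *; lra).
  lra.
Qed.


Lemma cont_pt_ed g x : (forall eps, 0 < eps -> exists d, 0 < d /\
  forall y, Rabs (y - x) < d -> Rabs (g y - g x) < eps) -> continuity_pt g x.
Proof.
  intros H eps Heps. destruct (H eps Heps) as [d [Hd Hy]].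
  exists d; split; [lra|]. intros y [_ Hyd]. simpl in *. unfold R_dist in *. auto.
Qed.

Lemma cont2_line1 F x y : continuity_2d_pt F x y -> continuity_pt (fun t => F t y) x.
Proof.
  intros H. apply cont_pt_ed. intros eps Heps.
  destruct (H (mkposreal eps Heps)) as [d Hd]. exists d; split; [apply cond_pos|].
  intros t Ht. apply Hd; auto. rewrite Rminus_diag, Rabs_R0; apply cond_pos.
Qed.

Lemma evt2 F a1 b1 a2 b2 : a1 <= b1 -> a2 <= b2 ->
  (forall x y, a1 <= x <= b1 -> a2 - 1 <= y <= b2 + 1 -> continuity_2d_pt F x y) ->
  exists xm ym, a1 <= xm <= b1 /\ a2 <= ym <= b2 /\
    forall x y, a1 <= x <= b1 -> a2 <= y <= b2 -> F x y <= F xm ym.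
Proof.
  intros H1 H2 Hc.
  assert (Hm : forall y, exists m, a2 - 1 <= y <= b2 + 1 ->
     a1 <= m <= b1 /\ forall t, a1 <= t <= b1 -> F t y <= F m y).
  { intros y. destruct (classic (a2 - 1 <= y <= b2 + 1)) as [Hy|Hy].
    - destruct (continuity_ab_maj (fun t => F t y) a1 b1 H1) as [m [Hm1 Hm2]].
      + intros c Hcc. apply cont2_line1. apply Hc; auto.
      + exists m. intros _. split; auto.
    - exists a1. intros Hy'. contradiction. }
  destruct (choice _ Hm) as [m Hmm].
  destruct (continuity_ab_maj (fun y => F (m y) y) a2 b2 H2) as [ym [Hym2 Hym1]].
  - intros c Hcc. apply cont_pt_ed. intros eps Heps.
    destruct (uniform_continuity_2d F a1 b1 (a2 - 1) (b2 + 1)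
      (fun x y Hx Hy => Hc x y Hx Hy) (mkposreal eps Heps)) as [d Hd].
    exists (Rmin d 1). split. { apply Rmin_pos; [apply cond_pos|lra]. }
    intros y Hy. pose proof (Rmin_l d 1). pose proof (Rmin_r d 1).
    assert (Hyr : a2 - 1 <= y <= b2 + 1).
    { assert (Rabs (y - c) < 1) by lra. apply Rabs_def2 in H3. lra. }
    assert (Hcr : a2 - 1 <= c <= b2 + 1) by lra.
    destruct (Hmm y Hyr) as [My1 My2]. destruct (Hmm c Hcr) as [Mc1 Mc2].
    assert (E1 : Rabs (F (m c) y - F (m c) c) < eps).
    { apply Hd; try lra; try (rewrite Rminus_diag, Rabs_R0; apply cond_pos). }
    assert (E2 : Rabs (F (m y) c - F (m y) y) < eps).
    { apply Hd; try lra; try (rewrite Rminus_diag, Rabs_R0; apply cond_pos).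
      rewrite Rabs_minus_sym. lra. }
    pose proof (My2 (m c) Mc1). pose proof (Mc2 (m y) My1).
    apply Rabs_def2 in E1. apply Rabs_def2 in E2. apply Rabs_def1; lra.
  - exists (m ym), ym. assert (Hyr : a2 - 1 <= ym <= b2 + 1) by lra.
    destruct (Hmm ym Hyr) as [M1 M2]. split; [exact M1|]. split; [exact Hym1|].
    intros x y Hx Hy. assert (Hyr' : a2 - 1 <= y <= b2 + 1) by lra.
    destruct (Hmm y Hyr') as [N1 N2]. specialize (Hym2 y Hy). simpl in Hym2.
    specialize (N2 x Hx). lra.
Qed.


Lemma key1 b ph phx phy phxx phyy p q px qy Qx Qy Qxx Qyy :
  0 < b <= 1 -> 0 < ph <= 1 ->
  phx^2 <= 16 * ph -> phy^2 <= 16 * ph -> -4 <= phxx -> -4 <= phyy ->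
  Qxx + Qyy + 3 * b * Qx >= 2 * (px^2 + qy^2) - 2 * (p * Qx + q * Qy) ->
  px + qy = - (p^2 + q^2 + 3 * b * p) ->
  phx * (p^2 + q^2) + ph * Qx = 0 ->
  phy * (p^2 + q^2) + ph * Qy = 0 ->
  phxx * (p^2 + q^2) + 2 * phx * Qx + ph * Qxx + phyy * (p^2 + q^2) + 2 * phy * Qy + ph * Qyy <= 0 ->
  ph * (p^2 + q^2) <= 2000.
Proof.
  intros Hb Hph Hx Hy Hxx Hyy HL HE Hgx Hgy Hgg.
  set (Q := p^2 + q^2) in *. set (G := ph * Q).
  assert (HQ : 0 <= Q) by (unfold Q; nra).
  assert (HG : 0 <= G) by (unfold G; nra).
  assert (S1 : ph^2 * (Qxx + Qyy) >= ph^2 * (px + qy)^2 + 2 * ph * Q * (p * phx + q * phy)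
                 + 3 * b * ph * phx * Q).
  { assert (ph^2 * (Qxx + Qyy + 3 * b * Qx) >= ph^2 * (2 * (px^2 + qy^2) - 2 * (p * Qx + q * Qy))).
    { apply Rle_ge. apply Rmult_le_compat_l; [nra|lra]. }
    assert (E1 : ph^2 * Qx = - (ph * phx * Q)) by (unfold Q in *; nra).
    assert (E2 : ph^2 * Qy = - (ph * phy * Q)) by (unfold Q in *; nra).
    assert (b * (ph^2 * Qx) = b * - (ph * phx * Q)) by (rewrite E1; ring).
    assert (p * (ph^2 * Qx) = p * - (ph * phx * Q)) by (rewrite E1; ring).
    assert (q * (ph^2 * Qy) = q * - (ph * phy * Q)) by (rewrite E2; ring).
    assert ((px + qy)^2 <= 2 * (px^2 + qy^2)) by (pose proof (pow2_ge_0 (px - qy)); nra).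
    assert (ph^2 * (px + qy)^2 <= ph^2 * (2 * (px^2 + qy^2))) by (apply Rmult_le_compat_l; nra).
    nra. }
  assert (S2 : ph^2 * (Qxx + Qyy) + ph * Q * (phxx + phyy) - 2 * Q * (phx^2 + phy^2) <= 0).
  { assert (E1 : ph * Qx = - phx * Q) by (unfold Q in *; lra).
    assert (E2 : ph * Qy = - phy * Q) by (unfold Q in *; lra).
    assert (H0 : ph * (phxx * Q + 2 * phx * Qx + ph * Qxx + phyy * Q + 2 * phy * Qy + ph * Qyy) <= ph * 0)
      by (apply Rmult_le_compat_l; unfold Q in *; lra).
    assert (phx * (ph * Qx) = phx * (- phx * Q)) by (rewrite E1; ring).
    assert (phy * (ph * Qy) = phy * (- phy * Q)) by (rewrite E2; ring).
    nra. }
  set (Y := ph * Q * ((2 * p + 3 * b) * phx + 2 * q * phy)).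
  assert (T1 : ph^2 * (px + qy)^2 >= G^2 / 2 - 9 * G).
  { rewrite HE. fold Q.
    assert (ph^2 * (Q + 3 * b * p)^2 + ph^2 * (3 * b * p)^2 >= ph^2 * Q^2 / 2).
    { assert (0 <= ph^2 * (Q + 2 * (3 * b * p))^2) by (apply Rmult_le_pos; apply pow2_ge_0). lra. }
    assert (p^2 <= Q) by (unfold Q; nra).
    assert (b^2 <= 1) by nra. assert (ph^2 <= ph) by nra.
    assert (ph^2 * b^2 <= ph) by nra.
    assert (ph^2 * b^2 * p^2 <= ph * Q) by (apply Rmult_le_compat; nra).
    unfold G. replace ((- (Q + 3 * b * p))^2) with ((Q + 3 * b * p)^2) by ring. nra. }
  assert (T2 : ph * Q * (phxx + phyy) >= - 8 * G).
  { unfold G. assert (0 <= ph * Q) by nra. nra. }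
  assert (T3 : 2 * Q * (phx^2 + phy^2) <= 64 * G).
  { unfold G. nra. }
  assert (T0 : G^2 / 2 - 81 * G + Y <= 0).
  { unfold Y. assert (ph^2 * Q^2 = G^2) by (unfold G; ring). nra. }
  assert (T4 : Y^2 <= G^2 * (256 * G + 576)).
  { unfold Y. set (u := (2 * p + 3 * b)).
    assert (CS : (u * phx + 2 * q * phy)^2 <= (u^2 + 4 * q^2) * (phx^2 + phy^2)).
    { pose proof (pow2_ge_0 (u * phy - 2 * q * phx)). nra. }
    assert (u^2 <= 8 * p^2 + 18) by (unfold u; pose proof (pow2_ge_0 (2*p - 3*b)); nra).
    assert (B1 : (u^2 + 4 * q^2) * (phx^2 + phy^2) <= (8 * Q + 18) * (32 * ph)).
    { apply Rmult_le_compat; try nra. unfold Q; nra. }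
    assert (B2 : (8 * Q + 18) * (32 * ph) <= 256 * G + 576) by (unfold G; nra).
    replace ((ph * Q * (u * phx + 2 * q * phy))^2) with (G^2 * (u * phx + 2 * q * phy)^2)
      by (unfold G; ring).
    apply Rmult_le_compat_l; [nra|]. lra. }
  destruct (Rle_or_lt G 2000) as [Hle|Hgt]; [exact Hle|exfalso].
  assert (0 <= G^2 / 2 - 81 * G) by nra.
  assert ((G^2 / 2 - 81 * G)^2 <= Y^2) by nra.
  assert ((G / 2 - 81)^2 * G^2 <= (256 * G + 576) * G^2) by nra.
  assert ((G / 2 - 81)^2 <= 256 * G + 576).
  { apply (Rmult_le_reg_r (G^2)); nra. }
  nra.
Qed.


Lemma key2 r a ph phx phy phxx phyy p q px qy Qx Qy Qxx Qyy :
  0 < r <= a -> 0 < ph <= 1 ->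
  r^2 * phx^2 <= 16 * ph -> r^2 * phy^2 <= 16 * ph -> -4 <= r^2 * phxx -> -4 <= r^2 * phyy ->
  Qxx + Qyy + 3 / a * Qx >= 2 * (px^2 + qy^2) - 2 * (p * Qx + q * Qy) ->
  px + qy = - (p^2 + q^2 + 3 / a * p) ->
  phx * (p^2 + q^2) + ph * Qx = 0 ->
  phy * (p^2 + q^2) + ph * Qy = 0 ->
  phxx * (p^2 + q^2) + 2 * phx * Qx + ph * Qxx + phyy * (p^2 + q^2) + 2 * phy * Qy + ph * Qyy <= 0 ->
  r^2 * (ph * (p^2 + q^2)) <= 2000.
Proof.
  intros Hr Hph Hx Hy Hxx Hyy HL HE Hgx Hgy Hgg.
  assert (Ha : 0 < a) by lra.
  assert (r^2 * (ph * (p^2 + q^2)) = ph * ((r*p)^2 + (r*q)^2)) as -> by ring.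
  apply (key1 (r / a) ph (r * phx) (r * phy) (r^2 * phxx) (r^2 * phyy) (r * p) (r * q)
           (r^2 * px) (r^2 * qy) (r^3 * Qx) (r^3 * Qy) (r^4 * Qxx) (r^4 * Qyy)).
  - split. apply Rdiv_lt_0_compat; lra. apply (Rmult_le_reg_r a); [lra|]. unfold Rdiv; rewrite Rmult_assoc, Rinv_l by lra; lra.
  - exact Hph.
  - nra.
  - nra.
  - exact Hxx.
  - exact Hyy.
  - assert (r^4 * (Qxx + Qyy + 3 / a * Qx) >= r^4 * (2 * (px^2 + qy^2) - 2 * (p * Qx + q * Qy))).
    { apply Rle_ge, Rmult_le_compat_l; [nra|lra]. }
    replace (r ^ 4 * Qxx + r ^ 4 * Qyy + 3 * (r / a) * (r ^ 3 * Qx)) with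
      (r^4 * (Qxx + Qyy + 3 / a * Qx)) by (field; lra).
    replace (2 * ((r ^ 2 * px) ^ 2 + (r ^ 2 * qy) ^ 2) - 2 * (r * p * (r ^ 3 * Qx) + r * q * (r ^ 3 * Qy)))
      with (r^4 * (2 * (px^2 + qy^2) - 2 * (p * Qx + q * Qy))) by ring.
    exact H.
  - replace (r ^ 2 * px + r ^ 2 * qy) with (r^2 * (px + qy)) by ring. rewrite HE. field. lra.
  - replace (r * phx * ((r * p) ^ 2 + (r * q) ^ 2) + ph * (r ^ 3 * Qx)) with
      (r^3 * (phx * (p^2 + q^2) + ph * Qx)) by ring. rewrite Hgx; ring.
  - replace (r * phy * ((r * p) ^ 2 + (r * q) ^ 2) + ph * (r ^ 3 * Qy)) with
      (r^3 * (phy * (p^2 + q^2) + ph * Qy)) by ring. rewrite Hgy; ring.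
  - match goal with |- ?L <= 0 => replace L with
      (r^4 * (phxx * (p^2 + q^2) + 2 * phx * Qx + ph * Qxx + phyy * (p^2 + q^2) + 2 * phy * Qy + ph * Qyy)) by ring end.
    assert (0 < r^4) by (apply pow_lt; lra). nra.
Qed.


Definition vk F := / F.
Definition vk1 F Fd := - Fd / (F * F).
Definition vk2 F Fd Fdd := (2 * Fd ^ 2 - F * Fdd) / F ^ 3.
Definition vK F := vk F * vk F.
Definition vK1 F Fd := vk1 F Fd * vk F + vk F * vk1 F Fd.
Definition vK2 F Fd Fdd := vk2 F Fd Fdd * vk F + 2 * (vk1 F Fd * vk1 F Fd) + vk F * vk2 F Fd Fdd.
Definition vN A B := A * A + B * B.
Definition vN1 A Ad B Bd := (Ad * A + A * Ad) + (Bd * B + B * Bd).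
Definition vN2 A Ad Add B Bd Bdd :=
  (Add * A + 2 * (Ad * Ad) + A * Add) + (Bdd * B + 2 * (Bd * Bd) + B * Bdd).
Definition vQ F A B := vN A B * vK F.
Definition vQ1 F Fd A Ad B Bd := vN1 A Ad B Bd * vK F + vN A B * vK1 F Fd.
Definition vQ2 F Fd Fdd A Ad Add B Bd Bdd :=
  vN2 A Ad Add B Bd Bdd * vK F + 2 * (vN1 A Ad B Bd * vK1 F Fd) + vN A B * vK2 F Fd Fdd.

Lemma LQ_identity a F F1 F2 F11 F12 F22 F111 F211 F122 F222 :
  a <> 0 -> F <> 0 ->
  F11 + F22 + 3 / a * F1 = 0 ->
  F111 + F122 - 3 / a ^ 2 * F1 + 3 / a * F11 = 0 ->
  F211 + F222 + 3 / a * F12 = 0 ->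
  let p := F1 / F in let q := F2 / F in
  let px := F11 / F - p ^ 2 in let py := F12 / F - p * q in let qy := F22 / F - q ^ 2 in
  let Qx := vQ1 F F1 F1 F11 F2 F12 in
  let Qy := vQ1 F F2 F1 F12 F2 F22 in
  vQ2 F F1 F11 F1 F11 F111 F2 F12 F211 + vQ2 F F2 F22 F1 F12 F122 F2 F22 F222 + 3 / a * Qx
  = 2 * (px ^ 2 + 2 * py ^ 2 + qy ^ 2) - 2 * (p * Qx + q * Qy) + 6 * p ^ 2 / a ^ 2.
Proof.
  intros Ha HF E0 Ex Ey p q px py qy Qx Qy.
  assert (F22 = - F11 - 3 / a * F1) by lra.
  assert (F122 = - F111 + 3 / a ^ 2 * F1 - 3 / a * F11) by lra.
  assert (F222 = - F211 - 3 / a * F12) by lra.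
  subst p q px py qy Qx Qy.
  unfold vQ2, vQ1, vN2, vN1, vN, vK2, vK1, vK, vk2, vk1, vk.
  rewrite H, H0, H1. field. auto.
Qed.

Lemma key3 r a ph phx phy phxx phyy F F1 F2 F11 F12 F22 F111 F211 F122 F222 :
  0 < r <= a -> 0 < ph <= 1 ->
  r^2 * phx^2 <= 16 * ph -> r^2 * phy^2 <= 16 * ph -> -4 <= r^2 * phxx -> -4 <= r^2 * phyy ->
  0 < F ->
  F11 + F22 + 3 / a * F1 = 0 ->
  F111 + F122 - 3 / a ^ 2 * F1 + 3 / a * F11 = 0 ->
  F211 + F222 + 3 / a * F12 = 0 ->
  phx * vQ F F1 F2 + ph * vQ1 F F1 F1 F11 F2 F12 = 0 ->
  phy * vQ F F1 F2 + ph * vQ1 F F2 F1 F12 F2 F22 = 0 ->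
  phxx * vQ F F1 F2 + 2 * phx * vQ1 F F1 F1 F11 F2 F12 + ph * vQ2 F F1 F11 F1 F11 F111 F2 F12 F211
  + (phyy * vQ F F1 F2 + 2 * phy * vQ1 F F2 F1 F12 F2 F22 + ph * vQ2 F F2 F22 F1 F12 F122 F2 F22 F222) <= 0 ->
  r^2 * (ph * vQ F F1 F2) <= 2000.
Proof.
  intros Hr Hph Hx Hy Hxx Hyy HF E0 Ex Ey Hgx Hgy Hgg.
  assert (Ha : a <> 0) by lra. assert (HF' : F <> 0) by lra.
  pose proof (LQ_identity a F F1 F2 F11 F12 F22 F111 F211 F122 F222 Ha HF' E0 Ex Ey) as HI.
  cbv zeta in HI.
  assert (HQ : vQ F F1 F2 = (F1 / F)^2 + (F2 / F)^2).
  { unfold vQ, vN, vK, vk. field. exact HF'. }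
  rewrite HQ in *.
  apply (key2 r a ph phx phy phxx phyy (F1 / F) (F2 / F) (F11 / F - (F1 / F)^2) (F22 / F - (F2 / F)^2)
     (vQ1 F F1 F1 F11 F2 F12) (vQ1 F F2 F1 F12 F2 F22)
     (vQ2 F F1 F11 F1 F11 F111 F2 F12 F211) (vQ2 F F2 F22 F1 F12 F122 F2 F22 F222)); auto.
  - rewrite HI.
    set (py := F12 / F - F1 / F * (F2 / F)).
    assert (0 <= py^2) by apply pow2_ge_0.
    assert (0 <= 6 * (F1 / F) ^ 2 / a ^ 2).
    { unfold Rdiv. apply Rmult_le_pos. nra. apply Rlt_le, Rinv_0_lt_compat. apply pow_lt. lra. }
    lra.
  - assert (F22 = - F11 - 3 / a * F1) by lra. rewrite H. field. split; auto.
  - lra.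
Qed.


Definition D2 (P : R -> Prop) (g g1 g2 : R -> R) :=
  forall t, P t -> derivable_pt_lim g t (g1 t) /\ derivable_pt_lim g1 t (g2 t).

Lemma dext f g x l : (forall t, f t = g t) -> derivable_pt_lim f x l -> derivable_pt_lim g x l.
Proof. intros H. apply dloc. exists 1. split; [lra|]. intros; auto. Qed.

Lemma D2_ext P g g1 g2 h h1 h2 : D2 P g g1 g2 -> (forall t, g t = h t) ->
  (forall t, g1 t = h1 t) -> (forall t, P t -> g2 t = h2 t) -> D2 P h h1 h2.
Proof.
  intros H E E1 E2 t Ht. destruct (H t Ht) as [H1 H2]. split.
  - eapply dval; [eapply dext; [exact E| exact H1]| apply E1].
  - eapply dval; [eapply dext; [exact E1| exact H2]| apply E2; auto].
Qed.

Lemma D2mul P a a1 a2 b b1 b2 : D2 P a a1 a2 -> D2 P b b1 b2 ->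
  D2 P (fun t => a t * b t) (fun t => a1 t * b t + a t * b1 t)
       (fun t => a2 t * b t + 2 * (a1 t * b1 t) + a t * b2 t).
Proof.
  intros Ha Hb t Ht. destruct (Ha t Ht) as [A1 A2]. destruct (Hb t Ht) as [B1 B2]. split.
  - apply dmul; auto.
  - eapply dval. apply dplus; apply dmul; eauto. ring.
Qed.

Lemma D2plus P a a1 a2 b b1 b2 : D2 P a a1 a2 -> D2 P b b1 b2 ->
  D2 P (fun t => a t + b t) (fun t => a1 t + b1 t) (fun t => a2 t + b2 t).
Proof.
  intros Ha Hb t Ht. destruct (Ha t Ht) as [A1 A2]. destruct (Hb t Ht) as [B1 B2]. split;
  apply dplus; auto.
Qed.

Lemma D2const P c : D2 P (fun _ => c) (fun _ => 0) (fun _ => 0).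
Proof. intros t _. split; apply dconst. Qed.

Lemma D2id P : D2 P (fun t => t) (fun _ => 1) (fun _ => 0).
Proof. intros t _. split; [apply did|apply dconst]. Qed.

Lemma D2inv P a a1 a2 : D2 P a a1 a2 -> (forall t, P t -> a t <> 0) ->
  D2 P (fun t => / a t) (fun t => - a1 t / (a t * a t))
       (fun t => (2 * a1 t ^ 2 - a t * a2 t) / a t ^ 3).
Proof.
  intros Ha Hn t Ht. destruct (Ha t Ht) as [A1 A2]. specialize (Hn t Ht). split.
  - apply dinv; auto.
  - assert (D : derivable_pt_lim (fun t => a t * a t) t (a1 t * a t + a t * a1 t)) by (apply dmul; auto).
    assert (Hn2 : a t * a t <> 0) by (apply Rmult_integral_contrapositive; auto).
    pose proof (derivable_pt_lim_div (fun t => - a1 t) (fun t => a t * a t) t (- a2 t) _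
      (derivable_pt_lim_opp a1 t (a2 t) A2) D Hn2) as H.
    eapply dval. { eapply dext; [|exact H]. intros s. unfold div_fct, opp_fct. reflexivity. }
    unfold Rsqr. field. auto.
Qed.

Lemma D2Q P F Fd Fdd A Ad Add B Bd Bdd :
  D2 P F Fd Fdd -> D2 P A Ad Add -> D2 P B Bd Bdd -> (forall t, P t -> F t <> 0) ->
  D2 P (fun t => vQ (F t) (A t) (B t)) (fun t => vQ1 (F t) (Fd t) (A t) (Ad t) (B t) (Bd t))
    (fun t => vQ2 (F t) (Fd t) (Fdd t) (A t) (Ad t) (Add t) (B t) (Bd t) (Bdd t)).
Proof.
  intros HF HA HB Hn.
  pose proof (D2mul _ _ _ _ _ _ _ (D2plus _ _ _ _ _ _ _ (D2mul _ _ _ _ _ _ _ HA HA) (D2mul _ _ _ _ _ _ _ HB HB))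
     (D2mul _ _ _ _ _ _ _ (D2inv _ _ _ _ HF Hn) (D2inv _ _ _ _ HF Hn))) as H.
  eapply D2_ext; [exact H| | |]; intros; reflexivity.
Qed.

Definition psi s := (1 - s * s) * (1 - s * s).
Definition dpsi s := -4 * s * (1 - s * s).
Definition ddpsi s := -4 + 12 * s * s.

Lemma D2psi P c r : r <> 0 ->
  D2 P (fun t => psi ((t - c) / r)) (fun t => dpsi ((t - c) / r) / r) (fun t => ddpsi ((t - c) / r) / r ^ 2).
Proof.
  intros Hr.
  pose proof (D2mul _ _ _ _ _ _ _ (D2plus _ _ _ _ _ _ _ (D2id P) (D2const P (- c))) (D2const P (/ r))) as L.
  pose proof (D2plus _ _ _ _ _ _ _ (D2const P 1) (D2mul _ _ _ _ _ _ _ (D2const P (-1)) (D2mul _ _ _ _ _ _ _ L L))) as M.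
  pose proof (D2mul _ _ _ _ _ _ _ M M) as H.
  eapply D2_ext; [exact H| | |]; intros; unfold psi, dpsi, ddpsi; simpl; field; auto.
Qed.


Lemma smooth_ops U f : smooth_on U f -> exists (S : (R->R->R)->Prop) (DX DY : (R->R->R)->(R->R->R)),
  S f /\ forall g, S g -> (forall x y, U x y -> continuous2_at g x y) /\ S (DX g) /\ S (DY g) /\
    forall x y, U x y -> partial_x g x y (DX g x y) /\ partial_y g x y (DY g x y).
Proof.
  intros [S [Hf HS]].
  assert (H : forall g, exists p : (R->R->R) * (R->R->R), S g ->
     S (fst p) /\ S (snd p) /\ forall x y, U x y -> partial_x g x y (fst p x y) /\ partial_y g x y (snd p x y)).
  { intros g. destruct (classic (S g)) as [Hg|Hg].
    - destruct (HS g Hg) as [_ [gx [gy [H1 [H2 H3]]]]]. exists (gx, gy). intros _. simpl; auto.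
    - exists (g, g). intros Hg'; contradiction. }
  destruct (choice _ H) as [D HD].
  exists S, (fun g => fst (D g)), (fun g => snd (D g)). split; [exact Hf|].
  intros g Hg. destruct (HD g Hg) as [A [B C]]. split; [apply (HS g Hg)|]. auto.
Qed.

Lemma cont_conv g x y : continuous2_at g x y -> continuity_2d_pt g x y.
Proof.
  intros H eps. destruct (H eps (cond_pos eps)) as [d [Hd Hd']].
  exists (mkposreal d Hd). intros u v Hu Hv. apply Hd'; auto.
Qed.

Lemma px_isd g x y l : partial_x g x y l -> is_derive (fun t => g t y) x l.
Proof. intros H. apply is_derive_Reals. exact H. Qed.
Lemma py_isd g x y l : partial_y g x y l -> is_derive (fun t => g x t) y l.
Proof. intros H. apply is_derive_Reals. exact H. Qed.

Lemma clairaut (g gx gy gxy gyx : R->R->R) x y : 0 < x ->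
  (forall u v, 0 < u -> partial_x g u v (gx u v)) -> (forall u v, 0 < u -> partial_y g u v (gy u v)) ->
  (forall u v, 0 < u -> partial_y gx u v (gxy u v)) -> (forall u v, 0 < u -> partial_x gy u v (gyx u v)) ->
  continuity_2d_pt gxy x y -> continuity_2d_pt gyx x y -> gxy x y = gyx x y.
Proof.
  intros Hx Hgx Hgy Hgxy Hgyx Cxy Cyx.
  assert (A1 : forall u v, 0 < u -> is_derive (fun z => Derive (fun t => g z t) v) u (gyx u v)).
  { intros u v Hu. apply (is_derive_ext_loc (fun z => gy z v)).
    - exists (mkposreal u Hu). intros z Hz. simpl in Hz. unfold ball in Hz; simpl in Hz.
      unfold AbsRing_ball, abs, minus, plus, opp in Hz; simpl in Hz.
      assert (0 < z) by (apply Rabs_def2 in Hz; lra).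
      symmetry. apply is_derive_unique. apply py_isd. auto.
    - apply px_isd. auto. }
  assert (A2 : forall u v, 0 < u -> is_derive (fun z => Derive (fun t => g t z) u) v (gxy u v)).
  { intros u v Hu. apply (is_derive_ext (fun z => gx u z)).
    - intros z. symmetry. apply is_derive_unique. apply px_isd. auto.
    - apply py_isd. auto. }
  assert (E : Derive (fun z => Derive (fun t => g z t) y) x = Derive (fun z => Derive (fun t => g t z) x) y).
  { apply Schwarz.
    - exists (mkposreal x Hx). intros u v Hu Hv. simpl in Hu.
      assert (0 < u) by (apply Rabs_def2 in Hu; lra).
      repeat split.
      + eexists. apply px_isd. auto.
      + eexists. apply py_isd. auto.
      + eexists. apply A1. auto.
      + eexists. apply A2. auto.
    - apply (continuity_2d_pt_ext_loc gyx).
      + exists (mkposreal x Hx). intros u v Hu Hv. simpl in Hu.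
        assert (0 < u) by (apply Rabs_def2 in Hu; lra).
        symmetry. apply is_derive_unique. apply A1. auto.
      + exact Cyx.
    - apply (continuity_2d_pt_ext_loc gxy).
      + exists (mkposreal x Hx). intros u v Hu Hv. simpl in Hu.
        assert (0 < u) by (apply Rabs_def2 in Hu; lra).
        symmetry. apply is_derive_unique. apply A2. auto.
      + exact Cxy. }
  pose proof (is_derive_unique _ _ _ (A1 x y Hx)) as U1.
  pose proof (is_derive_unique _ _ _ (A2 x y Hx)) as U2.
  rewrite <- U1, <- U2. symmetry. exact E.
Qed.


Lemma psi_bounds s : s * s <= 1 -> 0 <= psi s <= 1.
Proof. intros H. unfold psi. split; nra. Qed.

Lemma dpsi_bound s u : s * s <= 1 -> u * u <= 1 -> (dpsi s * psi u)^2 <= 16 * (psi s * psi u).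
Proof.
  intros Hs Hu. destruct (psi_bounds u Hu) as [H0 H1].
  assert (E : (dpsi s * psi u)^2 = 16 * (s * s) * psi s * (psi u * psi u)) by (unfold dpsi, psi; ring).
  rewrite E. assert (0 <= psi s) by (apply psi_bounds; auto).
  assert (psi u * psi u <= psi u) by nra.
  assert (0 <= s * s) by nra.
  assert (16 * (s * s) * psi s <= 16 * psi s) by nra.
  assert (0 <= 16 * (s * s) * psi s) by nra.
  nra.
Qed.

Lemma ddpsi_bound s u : s * s <= 1 -> u * u <= 1 -> -4 <= ddpsi s * psi u.
Proof.
  intros Hs Hu. destruct (psi_bounds u Hu) as [H0 H1]. unfold ddpsi.
  assert (0 <= s * s) by nra. nra.
Qed.

Lemma D2x (g g1 g2 : R -> R -> R) y : (forall x, 0 < x -> partial_x g x y (g1 x y)) ->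
  (forall x, 0 < x -> partial_x g1 x y (g2 x y)) ->
  D2 (fun t => 0 < t) (fun t => g t y) (fun t => g1 t y) (fun t => g2 t y).
Proof. intros H1 H2 t Ht. split; [apply H1|apply H2]; auto. Qed.

Lemma D2y (g g1 g2 : R -> R -> R) x : (forall y, partial_y g x y (g1 x y)) ->
  (forall y, partial_y g1 x y (g2 x y)) ->
  D2 (fun _ => True) (fun t => g x t) (fun t => g1 x t) (fun t => g2 x t).
Proof. intros H1 H2 t Ht. split; [apply H1|apply H2]. Qed.

Lemma vQ_nonneg F A B : 0 <= vQ F A B.
Proof. unfold vQ, vN, vK, vk. apply Rmult_le_pos; nra. Qed.

Lemma cont_vQ (f f1 f2 : R -> R -> R) x y : continuity_2d_pt f x y -> continuity_2d_pt f1 x y ->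
  continuity_2d_pt f2 x y -> f x y <> 0 ->
  continuity_2d_pt (fun u v => vQ (f u v) (f1 u v) (f2 u v)) x y.
Proof.
  intros H H1 H2 Hn. unfold vQ, vN, vK, vk.
  apply continuity_2d_pt_mult.
  - apply continuity_2d_pt_plus; apply continuity_2d_pt_mult; auto.
  - apply continuity_2d_pt_mult; apply continuity_2d_pt_inv; auto.
Qed.


Lemma cont_Phi x0 y0 r x y : continuity_2d_pt (fun u v => psi ((u - x0) / r) * psi ((v - y0) / r)) x y.
Proof.
  unfold psi, Rdiv.
  repeat first [apply continuity_2d_pt_mult | apply continuity_2d_pt_minus | apply continuity_2d_pt_plus
    | apply continuity_2d_pt_id1 | apply continuity_2d_pt_id2 | apply continuity_2d_pt_const].
Qed.


Lemma main_bound (f f1 f2 f11 f12 f21 f22 f111 f211 f122 f222 : R -> R -> R) x0 y0 :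
  0 < x0 ->
  (forall x y, 0 < x -> 0 < f x y) ->
  (forall x y, 0 < x -> partial_x f x y (f1 x y) /\ partial_y f x y (f2 x y) /\
     partial_x f1 x y (f11 x y) /\ partial_x f2 x y (f21 x y) /\
     partial_x f11 x y (f111 x y) /\ partial_x f21 x y (f211 x y) /\
     partial_y f1 x y (f12 x y) /\ partial_y f2 x y (f22 x y) /\
     partial_y f12 x y (f122 x y) /\ partial_y f22 x y (f222 x y)) ->
  (forall x y, 0 < x -> continuity_2d_pt f x y /\ continuity_2d_pt f1 x y /\ continuity_2d_pt f2 x y) ->
  (forall x y, 0 < x -> f21 x y = f12 x y) ->
  (forall x y, 0 < x -> f11 x y + f22 x y + 3 / x * f1 x y = 0) ->
  (forall x y, 0 < x -> f111 x y + f122 x y - 3 / x ^ 2 * f1 x y + 3 / x * f11 x y = 0) ->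
  (forall x y, 0 < x -> f211 x y + f222 x y + 3 / x * f12 x y = 0) ->
  x0 ^ 2 * vQ (f x0 y0) (f1 x0 y0) (f2 x0 y0) <= 8000.
Proof.
  intros Hx0 Hpos Hd Hc Hsym E0 Ex Ey.
  set (r := x0 / 2).
  assert (Hr : 0 < r) by (unfold r; lra).
  set (G := fun u v => (psi ((u - x0) / r) * psi ((v - y0) / r)) * vQ (f u v) (f1 u v) (f2 u v)).
  destruct (evt2 G (x0 - r) (x0 + r) (y0 - r) (y0 + r)) as [xm [ym [Hxm [Hym Hmax]]]]; try lra.
  { intros x y Hx Hy. unfold G. apply continuity_2d_pt_mult; [apply cont_Phi|].
    assert (0 < x) by (unfold r in *; lra). destruct (Hc x y H) as [C1 [C2 C3]].
    apply cont_vQ; auto. specialize (Hpos x y H); lra. }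
  assert (HG0 : G x0 y0 = vQ (f x0 y0) (f1 x0 y0) (f2 x0 y0)).
  { unfold G. replace ((x0 - x0) / r) with 0 by (field; lra).
    replace ((y0 - y0) / r) with 0 by (field; lra). unfold psi. ring. }
  assert (HM : G x0 y0 <= G xm ym) by (apply Hmax; lra).
  assert (HQ0 := vQ_nonneg (f x0 y0) (f1 x0 y0) (f2 x0 y0)).
  destruct (Rle_or_lt (G xm ym) 0) as [Hle|Hgt].
  { assert (0 < x0^2) by (apply pow_lt; lra). nra. }
  set (s := (xm - x0) / r). set (u := (ym - y0) / r).
  assert (Esr : s * r = xm - x0) by (unfold s; field; lra).
  assert (Eur : u * r = ym - y0) by (unfold u; field; lra).
  assert (Hs1' : -1 <= s <= 1) by (split; nra).
  assert (Hu1' : -1 <= u <= 1) by (split; nra).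
  assert (Hs1 : s * s <= 1) by nra.
  assert (Hu1 : u * u <= 1) by nra.
  destruct (psi_bounds s Hs1) as [Ps0 Ps1]. destruct (psi_bounds u Hu1) as [Pu0 Pu1].
  assert (HQm := vQ_nonneg (f xm ym) (f1 xm ym) (f2 xm ym)).
  assert (Hph : 0 < psi s * psi u).
  { destruct (Rle_lt_or_eq_dec 0 (psi s * psi u)) as [?|E]; [nra|auto|].
    exfalso. unfold G in Hgt. fold s u in Hgt. rewrite <- E in Hgt. lra. }
  assert (Hs2 : s * s < 1).
  { destruct (Rle_lt_or_eq_dec _ _ Hs1) as [?|E]; auto. exfalso.
    assert (psi s = 0) by (unfold psi; rewrite E; ring). rewrite H in Hph. lra. }
  assert (Hu2 : u * u < 1).
  { destruct (Rle_lt_or_eq_dec _ _ Hu1) as [?|E]; auto. exfalso.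
    assert (psi u = 0) by (unfold psi; rewrite E; ring). rewrite H in Hph. lra. }
  assert (Hdx : Rabs (xm - x0) < r).
  { assert (-1 < s < 1) by (split; nra). apply Rabs_def1; nra. }
  assert (Hdy : Rabs (ym - y0) < r).
  { assert (-1 < u < 1) by (split; nra). apply Rabs_def1; nra. }
  assert (Hxm0 : 0 < xm) by (unfold r in *; lra).
  assert (Hrne : r <> 0) by lra.
  assert (HDf : D2 (fun t => 0 < t) (fun t => f t ym) (fun t => f1 t ym) (fun t => f11 t ym)).
  { apply D2x; intros; apply Hd; auto. }
  assert (HDA : D2 (fun t => 0 < t) (fun t => f1 t ym) (fun t => f11 t ym) (fun t => f111 t ym)).
  { apply D2x; intros; apply Hd; auto. }
  assert (HDB : D2 (fun t => 0 < t) (fun t => f2 t ym) (fun t => f21 t ym) (fun t => f211 t ym)).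
  { apply D2x; intros; apply Hd; auto. }
  pose proof (D2Q _ _ _ _ _ _ _ _ _ _ HDf HDA HDB) as HQl.
  pose proof (D2mul _ _ _ _ _ _ _ (D2mul _ _ _ _ _ _ _ (D2psi (fun t => 0 < t) x0 r Hrne) (D2const _ (psi u)))
     (HQl ltac:(intros t Ht; specialize (Hpos t ym Ht); lra))) as HGl.
  set (dx := r - Rabs (xm - x0)).
  assert (Hdx0 : 0 < dx) by (unfold dx; lra).
  assert (Hxin : forall t, Rabs (t - xm) < dx -> x0 - r <= t <= x0 + r /\ 0 < t).
  { intros t Ht. unfold dx in Ht. apply Rabs_def2 in Ht.
    pose proof (Rle_abs (xm - x0)). pose proof (Rle_abs (- (xm - x0))). rewrite Rabs_Ropp in *.
    unfold r in *; lra. }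
  destruct (HGl xm Hxm0) as [Gx1 Gx2].
  assert (Gx0 := max_d1 (fun t => G t ym) xm _ dx Hdx0 Gx1
     ltac:(intros t Ht; apply Hmax; [apply Hxin; auto| lra])).
  assert (Gxx0 := max_d2 (fun t => G t ym) _ xm _ dx Hdx0
     ltac:(intros t Ht; apply (HGl t); apply Hxin; auto) Gx2
     ltac:(intros t Ht; apply Hmax; [apply Hxin; auto| lra])).
  cbv beta in Gx0, Gxx0. rewrite (Hsym xm ym Hxm0) in Gx0, Gxx0.
  assert (HDf' : D2 (fun _ => True) (fun t => f xm t) (fun t => f2 xm t) (fun t => f22 xm t)).
  { apply D2y; intros; apply Hd; auto. }
  assert (HDA' : D2 (fun _ => True) (fun t => f1 xm t) (fun t => f12 xm t) (fun t => f122 xm t)).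
  { apply D2y; intros; apply Hd; auto. }
  assert (HDB' : D2 (fun _ => True) (fun t => f2 xm t) (fun t => f22 xm t) (fun t => f222 xm t)).
  { apply D2y; intros; apply Hd; auto. }
  pose proof (D2Q _ _ _ _ _ _ _ _ _ _ HDf' HDA' HDB') as HQl'.
  pose proof (D2mul _ _ _ _ _ _ _ (D2mul _ _ _ _ _ _ _ (D2const _ (psi s)) (D2psi (fun _ => True) y0 r Hrne))
     (HQl' ltac:(intros t Ht; specialize (Hpos xm t Hxm0); lra))) as HGl'.
  set (dy := r - Rabs (ym - y0)).
  assert (Hdy0 : 0 < dy) by (unfold dy; lra).
  assert (Hyin : forall t, Rabs (t - ym) < dy -> y0 - r <= t <= y0 + r).
  { intros t Ht. unfold dy in Ht. apply Rabs_def2 in Ht.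
    pose proof (Rle_abs (ym - y0)). pose proof (Rle_abs (- (ym - y0))). rewrite Rabs_Ropp in *.
    lra. }
  destruct (HGl' ym I) as [Gy1 Gy2].
  assert (Gy0 := max_d1 (fun t => G xm t) ym _ dy Hdy0 Gy1
     ltac:(intros t Ht; apply Hmax; [lra | apply Hyin; auto])).
  assert (Gyy0 := max_d2 (fun t => G xm t) _ ym _ dy Hdy0
     ltac:(intros t Ht; apply (HGl' t); exact I) Gy2
     ltac:(intros t Ht; apply Hmax; [lra | apply Hyin; auto])).
  cbv beta in Gy0, Gyy0.
  fold s u in Gx0, Gxx0, Gy0, Gyy0.
  assert (HGm : G xm ym = psi s * psi u * vQ (f xm ym) (f1 xm ym) (f2 xm ym)) by reflexivity.
  assert (K : r^2 * (psi s * psi u * vQ (f xm ym) (f1 xm ym) (f2 xm ym)) <= 2000).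
  { apply (key3 r xm (psi s * psi u) (dpsi s / r * psi u + psi s * 0) (0 * psi u + psi s * (dpsi u / r))
      (ddpsi s / r^2 * psi u + 2 * (dpsi s / r * 0) + psi s * 0)
      (0 * psi u + 2 * (0 * (dpsi u / r)) + psi s * (ddpsi u / r^2))
      (f xm ym) (f1 xm ym) (f2 xm ym) (f11 xm ym) (f12 xm ym) (f22 xm ym) (f111 xm ym)
      (f211 xm ym) (f122 xm ym) (f222 xm ym)).
    - unfold r in *; lra.
    - split; [lra|nra].
    - replace (r ^ 2 * (dpsi s / r * psi u + psi s * 0) ^ 2) with ((dpsi s * psi u)^2) by (field; lra).
      apply dpsi_bound; auto.
    - replace (r ^ 2 * (0 * psi u + psi s * (dpsi u / r)) ^ 2) with ((dpsi u * psi s)^2) by (field; lra).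
      rewrite (Rmult_comm (psi s) (psi u)). apply dpsi_bound; auto.
    - replace (r ^ 2 * (ddpsi s / r ^ 2 * psi u + 2 * (dpsi s / r * 0) + psi s * 0)) with
        (ddpsi s * psi u) by (field; lra). apply ddpsi_bound; auto.
    - replace (r ^ 2 * (0 * psi u + 2 * (0 * (dpsi u / r)) + psi s * (ddpsi u / r ^ 2))) with
        (ddpsi u * psi s) by (field; lra). apply ddpsi_bound; auto.
    - apply Hpos; auto.
    - apply E0; auto.
    - apply Ex; auto.
    - apply Ey; auto.
    - exact Gx0.
    - exact Gy0.
    - lra. }
  rewrite <- HGm in K. rewrite HG0 in HM.
  assert (x0 ^ 2 = 4 * r ^ 2) by (unfold r; field).
  assert (0 < r ^ 2) by (apply pow_lt; lra).
  nra.
Qed.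


Theorem proposition4p3 :
  exists c : R, forall f : R -> R -> R,
    smooth_on H2 f ->
    (forall x y, H2 x y -> 0 < f x y) ->
    (exists fx fy fxx fyy : R -> R -> R,
       forall x y, H2 x y ->
         partial_x f x y (fx x y) /\ partial_y f x y (fy x y) /\
         partial_x fx x y (fxx x y) /\ partial_y fy x y (fyy x y) /\
         fxx x y + fyy x y + 3 / x * fx x y = 0) ->
    forall x y px py, H2 x y ->
      partial_x f x y px -> partial_y f x y py ->
      x * sqrt ((px / f x y) ^ 2 + (py / f x y) ^ 2) < c.
Proof.
  exists 90. intros f Hs Hpos [fx [fy [fxx [fyy Hpde]]]] x0 y0 px py Hx0 Hpx Hpy.
  unfold H2 in *.
  destruct (smooth_ops H2 f Hs) as [S [DX [DY [Sf HS]]]].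
  set (f1 := DX f). set (f2 := DY f). set (f11 := DX f1). set (f12 := DY f1).
  set (f21 := DX f2). set (f22 := DY f2). set (f111 := DX f11). set (f112 := DY f11).
  set (f121 := DX f12). set (f122 := DY f12). set (f211 := DX f21). set (f212 := DY f21).
  set (f221 := DX f22). set (f222 := DY f22).
  destruct (HS f Sf) as [C0 [S1 [S2 P0]]].
  destruct (HS f1 S1) as [C1 [S11 [S12 P1]]].
  destruct (HS f2 S2) as [C2 [S21 [S22 P2]]].
  destruct (HS f11 S11) as [C11 [S111 [S112 P11]]].
  destruct (HS f12 S12) as [C12 [S121 [S122 P12]]].
  destruct (HS f21 S21) as [C21 [S211 [S212 P21]]].
  destruct (HS f22 S22) as [C22 [S221 [S222 P22]]].
  unfold H2 in *.
  assert (Hsym : forall x y, 0 < x -> f21 x y = f12 x y).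
  { intros x y Hx. symmetry. apply (clairaut f f1 f2 f12 f21 x y Hx).
    - intros; apply P0; auto. - intros; apply P0; auto.
    - intros; apply P1; auto. - intros; apply P2; auto.
    - apply cont_conv, C12; auto. - apply cont_conv, C21; auto. }
  assert (Sym2 : forall x y, 0 < x -> f212 x y = f221 x y).
  { intros x y Hx. apply (clairaut f2 f21 f22 f212 f221 x y Hx).
    - intros; apply P2; auto. - intros; apply P2; auto.
    - intros; apply P21; auto. - intros; apply P22; auto.
    - apply cont_conv. destruct (HS _ S212) as [C _]. apply C; auto.
    - apply cont_conv. destruct (HS _ S221) as [C _]. apply C; auto. }
  assert (Sym1 : forall x y, 0 < x -> f112 x y = f121 x y).
  { intros x y Hx. apply (clairaut f1 f11 f12 f112 f121 x y Hx).
    - intros; apply P1; auto. - intros; apply P1; auto.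
    - intros; apply P11; auto. - intros; apply P12; auto.
    - apply cont_conv. destruct (HS _ S112) as [C _]. apply C; auto.
    - apply cont_conv. destruct (HS _ S121) as [C _]. apply C; auto. }
  assert (T1 : forall x y, 0 < x -> f221 x y = f122 x y).
  { intros x y Hx. rewrite <- Sym2 by auto.
    apply (uniqueness_limite (fun t => f12 x t) y).
    - eapply dext; [| apply (P21 x y Hx)]. intros t. simpl. apply Hsym; auto.
    - apply (P12 x y Hx). }
  assert (T2 : forall x y, 0 < x -> f112 x y = f211 x y).
  { intros x y Hx. rewrite Sym1 by auto.
    apply (uniqueness_limite (fun t => f21 t y) x).
    - eapply dloc; [| apply (P12 x y Hx)]. exists x. split; auto. intros t Ht.
      apply Rabs_def2 in Ht. symmetry. apply Hsym. lra.
    - apply (P21 x y Hx). }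
  assert (E0 : forall x y, 0 < x -> f11 x y + f22 x y + 3 / x * f1 x y = 0).
  { intros x y Hx. destruct (Hpde x y Hx) as [Q1 [Q2 [Q3 [Q4 Q5]]]].
    assert (U1 : forall x y, 0 < x -> fx x y = f1 x y).
    { intros a b Ha. destruct (Hpde a b Ha) as [R1 _]. apply (uniqueness_limite (fun t => f t b) a); auto.
      apply P0; auto. }
    assert (U2 : forall x y, 0 < x -> fy x y = f2 x y).
    { intros a b Ha. destruct (Hpde a b Ha) as [_ [R2 _]]. apply (uniqueness_limite (fun t => f a t) b); auto.
      apply P0; auto. }
    assert (fxx x y = f11 x y).
    { apply (uniqueness_limite (fun t => f1 t y) x); [| apply P1; auto].
      eapply dloc; [| exact Q3]. exists x. split; auto. intros t Ht. apply Rabs_def2 in Ht.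
      apply U1. lra. }
    assert (fyy x y = f22 x y).
    { apply (uniqueness_limite (fun t => f2 x t) y); [| apply P2; auto].
      eapply dext; [| exact Q4]. intros t. apply U2. auto. }
    rewrite <- H, <- H0, <- U1 by auto. exact Q5. }
  assert (D3 : forall x, 0 < x -> derivable_pt_lim (fun t => 3 / t) x (- 3 / x ^ 2)).
  { intros x Hx. eapply dval.
    - apply (dmul (fun _ => 3) (fun t => / t)); [apply dconst| apply (dinv (fun t => t)); [apply did| lra]].
    - field. lra. }
  assert (Ex : forall x y, 0 < x -> f111 x y + f122 x y - 3 / x ^ 2 * f1 x y + 3 / x * f11 x y = 0).
  { intros x y Hx.
    assert (HD : derivable_pt_lim (fun t => f11 t y + f22 t y + 3 / t * f1 t y) x
                  (f111 x y + f221 x y + (- 3 / x ^ 2 * f1 x y + 3 / x * f11 x y))).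
    { apply dplus; [apply dplus|]. apply P11; auto. apply P22; auto.
      apply (dmul (fun t => 3 / t) (fun t => f1 t y)); [apply D3; auto| apply P1; auto]. }
    assert (HZ : derivable_pt_lim (fun t => f11 t y + f22 t y + 3 / t * f1 t y) x 0).
    { eapply dloc; [| apply (dconst 0 x)]. exists x. split; auto. intros t Ht.
      apply Rabs_def2 in Ht. symmetry. apply E0. lra. }
    pose proof (uniqueness_limite _ _ _ _ HD HZ). rewrite T1 in H by auto.
    replace (- 3 / x ^ 2 * f1 x y) with (- (3 / x ^ 2 * f1 x y)) in H by (unfold Rdiv; ring). lra. }
  assert (Ey : forall x y, 0 < x -> f211 x y + f222 x y + 3 / x * f12 x y = 0).
  { intros x y Hx.
    assert (HD : derivable_pt_lim (fun t => f11 x t + f22 x t + 3 / x * f1 x t) y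
                  (f112 x y + f222 x y + (0 * f1 x y + 3 / x * f12 x y))).
    { apply dplus; [apply dplus|]. apply P11; auto. apply P22; auto.
      apply (dmul (fun _ => 3 / x) (fun t => f1 x t)); [apply dconst| apply P1; auto]. }
    assert (HZ : derivable_pt_lim (fun t => f11 x t + f22 x t + 3 / x * f1 x t) y 0).
    { eapply dext; [| apply (dconst 0 y)]. intros t. symmetry. apply E0. lra. }
    pose proof (uniqueness_limite _ _ _ _ HD HZ). rewrite T2 in H by auto. lra. }
  assert (MB := main_bound f f1 f2 f11 f12 f21 f22 f111 f211 f122 f222 x0 y0 Hx0 Hpos
    ltac:(intros x y Hx; repeat split; first [apply P0 | apply P1 | apply P2 | apply P11 | apply P12
           | apply P21 | apply P22]; auto)
    ltac:(intros x y Hx; repeat split; apply cont_conv; first [apply C0 | apply C1 | apply C2]; auto)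
    Hsym E0 Ex Ey).
  assert (Epx : px = f1 x0 y0) by (apply (uniqueness_limite (fun t => f t y0) x0); auto; apply P0; auto).
  assert (Epy : py = f2 x0 y0) by (apply (uniqueness_limite (fun t => f x0 t) y0); auto; apply P0; auto).
  assert (HF := Hpos x0 y0 Hx0).
  assert (EV : (px / f x0 y0) ^ 2 + (py / f x0 y0) ^ 2 = vQ (f x0 y0) (f1 x0 y0) (f2 x0 y0)).
  { rewrite Epx, Epy. unfold vQ, vN, vK, vk. field. lra. }
  rewrite EV. set (V := vQ (f x0 y0) (f1 x0 y0) (f2 x0 y0)) in *.
  assert (HV : 0 <= V) by apply vQ_nonneg.
  pose proof (sqrt_sqrt V HV). pose proof (sqrt_pos V).
  assert (0 <= x0 * sqrt V) by nra.
  assert ((x0 * sqrt V) ^ 2 <= 8000) by (replace ((x0 * sqrt V) ^ 2) with (x0 ^ 2 * (sqrt V * sqrt V)) by ring; nra).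
  nra.
Qed.
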